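(* For all formulas $\phi_1,\phi_2$ of Full Modal Team Logic $\mathcal{FMTL}$ and every letter $p$: $\tilde\exists p\,(\phi_1\wedge NE)\equiv(\tilde\exists p\,\phi_1)\wedge NE$; $\tilde\exists p\,(\phi_1\vee\phi_2)\equiv\tilde\exists p\,\phi_1\vee\tilde\exists p\,\phi_2$; and $\tilde\exists p\,(\phi_1\otimes\phi_2)\equiv\tilde\exists p\,\phi_1\otimes\tilde\exists p\,\phi_2$, where $\equiv$ means satisfaction by the same team models.
   Context: Kripke models $M=(W,R,V)$, $V:W\to\mathcal P(Prop)$; team models $(M,X)$, $X\subseteq W$. Formulas of $\mathcal{FMTL}$: $p,\neg p,\bot,NE,\wedge,\otimes,\vee,\Diamond,\Box$, with team semantics: $(M,X)\models p$ iff $p\in V(s)$ for all $s\in X$; $\neg p$ iff $p\notin V(s)$ for all $s\in X$; $\bot$ iff $X=\emptyset$; $NE$ iff $X\neq\emptyset$; $\wedge$ componentwise; $\vee$: one disjunct holds on $(M,X)$; $\otimes$: $X=X_1\cup X_2$ with $(M,X_i)\models\phi_i$; $\Diamond\phi$: $(M,Y)\models\phi$ for some $Y$ such that every $x\in X$ has an $R$-successor in $Y$ and every $y\in Y$ is a successor of some $x\in X$; $\Box\phi$: $(M,R[X])\models\phi$, $R[X]$ the set of successors of elements of $X$. For a set $\mathcal P$ of letters, $(M,w)\rightleftharpoons_{\mathcal P}(N,v)$: some relation containing $(w,v)$ has all pairs agreeing on $\mathcal P$ and satisfying forth and back conditions; $(M,X)\rightleftharpoons_{\mathcal P}(N,Y)$: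 each $x\in X$ is $\mathcal P$-bisimilar to some $y\in Y$ and vice versa. $Free(\phi)$ is the set of letters of $\phi$ not bound by $\tilde\exists$, with $Free(\tilde\exists p\,\phi)=Free(\phi)\setminus\{p\}$; $(M,X)\models\tilde\exists p\,\phi$ iff there is $(M',X')$ with $(M',X')\rightleftharpoons_{Free(\phi)\setminus\{p\}}(M,X)$ and $(M',X')\models\phi$. *)

(* Defs.v *)
From Stdlib Require Import Arith.

Definition letter := nat.

Record model := Model {
  world : Type;
  rel : world -> world -> Prop;
  val : world -> letter -> Prop
}.

Definition team (M : model) := world M -> Prop.

Inductive form :=
| FAtom : letter -> form
| FNAtom : letter -> form
| FBot : form
| FNE : form
| FAnd : form -> form -> form
| FTensor : form -> form -> form
| FOr : form -> form -> form            (* \vee (global disjunction) *)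
| FDia : form -> form
| FBox : form -> form
| FExists : letter -> form -> form.

Fixpoint is_fmtl (f : form) : Prop :=
  match f with
  | FAtom _ | FNAtom _ | FBot | FNE => True
  | FAnd a b | FTensor a b | FOr a b => is_fmtl a /\ is_fmtl b
  | FDia a | FBox a => is_fmtl a
  | FExists _ _ => False
  end.

Fixpoint free (f : form) (q : letter) : Prop :=
  match f with
  | FAtom p | FNAtom p => p = q
  | FBot | FNE => False
  | FAnd a b | FTensor a b | FOr a b => free a q \/ free b q
  | FDia a | FBox a => free a q
  | FExists p a => free a q /\ q <> p
  end.

Definition pbisim (P : letter -> Prop) (M N : model) (w : world M) (v : world N) : Prop :=
  exists Z : world M -> world N -> Prop,
    Z w v /\
    forall a b, Z a b ->
      (forall q, P q -> (val M a q <-> val N b q)) /\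
      (forall a', rel M a a' -> exists b', rel N b b' /\ Z a' b') /\
      (forall b', rel N b b' -> exists a', rel M a a' /\ Z a' b').

Definition team_pbisim (P : letter -> Prop) (M N : model) (X : team M) (Y : team N) : Prop :=
  (forall x, X x -> exists y, Y y /\ pbisim P M N x y) /\
  (forall y, Y y -> exists x, X x /\ pbisim P M N x y).

Definition image (M : model) (X : team M) : team M :=
  fun y => exists x, X x /\ rel M x y.

Fixpoint sat (M : model) (X : team M) (f : form) {struct f} : Prop :=
  match f with
  | FAtom p => forall s, X s -> val M s p
  | FNAtom p => forall s, X s -> ~ val M s p
  | FBot => forall s, ~ X s
  | FNE => exists s, X s
  | FAnd a b => sat M X a /\ sat M X b
  | FOr a b => sat M X a \/ sat M X b
  | FTensor a b => exists X1 X2 : team M,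
      (forall s, X s <-> (X1 s \/ X2 s)) /\ sat M X1 a /\ sat M X2 b
  | FDia a => exists Y : team M,
      (forall x, X x -> exists y, Y y /\ rel M x y) /\
      (forall y, Y y -> exists x, X x /\ rel M x y) /\
      sat M Y a
  | FBox a => sat M (image M X) a
  | FExists p a => exists (M' : model) (X' : team M'),
      team_pbisim (fun q => free a q /\ q <> p) M' M X' X /\ sat M' X' a
  end.

Definition equiv (f g : form) : Prop :=
  forall (M : model) (X : team M), sat M X f <-> sat M X g.

(* Main.v *)
Require Import Defs.
From Stdlib Require Import Arith.

Lemma pbisim_step (P : letter -> Prop) (M N : model) a b :
  pbisim P M N a b ->
  (forall q, P q -> (val M a q <-> val N b q)) /\
  (forall a', rel M a a' -> exists b', rel N b b' /\ pbisim P M N a' b') /\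
  (forall b', rel N b b' -> exists a', rel M a a' /\ pbisim P M N a' b').
Proof.
  intros [Z [HZ HS]]. destruct (HS a b HZ) as [Hv [Hf Hb]].
  split; [exact Hv|split].
  - intros a' Ha. destruct (Hf a' Ha) as [b' [Hr Hz]]. exists b'. split; [exact Hr|].
    exists Z. split; assumption.
  - intros b' Hb'. destruct (Hb b' Hb') as [a' [Hr Hz]]. exists a'. split; [exact Hr|].
    exists Z. split; assumption.
Qed.

Lemma pbisim_mono (P Q : letter -> Prop) M N a b :
  (forall q, P q -> Q q) -> pbisim Q M N a b -> pbisim P M N a b.
Proof.
  intros HPQ [Z [HZ HS]]. exists Z. split; [exact HZ|].
  intros x y Hxy. destruct (HS x y Hxy) as [Hv H]. split; [|exact H].
  intros q Hq. apply Hv, HPQ, Hq.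
Qed.

Lemma team_mono (P Q : letter -> Prop) M N X Y :
  (forall q, P q -> Q q) -> team_pbisim Q M N X Y -> team_pbisim P M N X Y.
Proof.
  intros HPQ [H1 H2]. split.
  - intros x Hx. destruct (H1 x Hx) as [y [Hy Hb]]. exists y. split; [exact Hy|].
    eapply pbisim_mono; eauto.
  - intros y Hy. destruct (H2 y Hy) as [x [Hx Hb]]. exists x. split; [exact Hx|].
    eapply pbisim_mono; eauto.
Qed.

Lemma inv : forall phi, is_fmtl phi -> forall Q M N X Y,
  (forall q, free phi q -> Q q) -> team_pbisim Q M N X Y -> sat M X phi -> sat N Y phi.
Proof.
  induction phi; simpl; intros Hf Q M N X Y HQ HT Hs; pose proof HT as [H1 H2].
  - intros s Ys. destruct (H2 s Ys) as [x [Xx Hb]]. destruct (pbisim_step _ _ _ _ _ Hb) as [Hv _].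
    apply (Hv l (HQ l eq_refl)). apply Hs; auto.
  - intros s Ys. destruct (H2 s Ys) as [x [Xx Hb]]. destruct (pbisim_step _ _ _ _ _ Hb) as [Hv _].
    rewrite <- (Hv l (HQ l eq_refl)). apply Hs; auto.
  - intros s Ys. destruct (H2 s Ys) as [x [Xx _]]. exact (Hs x Xx).
  - destruct Hs as [s Xs]. destruct (H1 s Xs) as [y [Yy _]]. exists y; exact Yy.
  - destruct Hf as [F1 F2]. destruct Hs as [S1 S2]. split.
    + eapply IHphi1 with (Q := Q); eauto; intros q Hq; apply HQ; left; exact Hq.
    + eapply IHphi2 with (Q := Q); eauto; intros q Hq; apply HQ; right; exact Hq.
  - destruct Hf as [F1 F2]. destruct Hs as [X1 [X2 [HX [S1 S2]]]].
    exists (fun y => Y y /\ exists x, X1 x /\ pbisim Q M N x y).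
    exists (fun y => Y y /\ exists x, X2 x /\ pbisim Q M N x y).
    split; [|split].
    + intros s; split.
      * intro Ys. destruct (H2 s Ys) as [x [Xx Hb]]. apply HX in Xx.
        destruct Xx as [Xx|Xx]; [left|right]; split; eauto.
      * intros [[Ys _]|[Ys _]]; exact Ys.
    + eapply IHphi1 with (Q := Q) (X := X1); [assumption| | |assumption].
      * intros q Hq; apply HQ; left; exact Hq.
      * split.
        -- intros x Hx. assert (Xx : X x) by (apply HX; left; exact Hx).
           destruct (H1 x Xx) as [y [Yy Hb]]. exists y. split; [split|]; eauto.
        -- intros y [Yy [x [Hx Hb]]]. eauto.
    + eapply IHphi2 with (Q := Q) (X := X2); [assumption| | |assumption].
      * intros q Hq; apply HQ; right; exact Hq.
      * split.
        -- intros x Hx. assert (Xx : X x) by (apply HX; right; exact Hx).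
           destruct (H1 x Xx) as [y [Yy Hb]]. exists y. split; [split|]; eauto.
        -- intros y [Yy [x [Hx Hb]]]. eauto.
  - destruct Hf as [F1 F2]. destruct Hs as [S|S]; [left|right].
    + eapply IHphi1 with (Q := Q); eauto; intros q Hq; apply HQ; left; exact Hq.
    + eapply IHphi2 with (Q := Q); eauto; intros q Hq; apply HQ; right; exact Hq.
  - destruct Hs as [Y' [F [B S]]].
    exists (fun b => (exists y, Y y /\ rel N y b) /\ exists a, Y' a /\ pbisim Q M N a b).
    split; [|split].
    + intros y Yy. destruct (H2 y Yy) as [x [Xx Hb]]. destruct (F x Xx) as [a [Ya Hr]].
      destruct (pbisim_step _ _ _ _ _ Hb) as [_ [Hfo _]].
      destruct (Hfo a Hr) as [b [Hr' Hb']]. exists b. split; [split|]; eauto.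
    + intros b [[y [Yy Hr]] _]. eauto.
    + eapply IHphi with (Q := Q) (X := Y'); [assumption|assumption| |assumption]. split.
      * intros a Ya. destruct (B a Ya) as [x [Xx Hr]]. destruct (H1 x Xx) as [y [Yy Hb]].
        destruct (pbisim_step _ _ _ _ _ Hb) as [_ [Hfo _]].
        destruct (Hfo a Hr) as [b [Hr' Hb']]. exists b. split; [split|]; eauto.
      * intros b [_ [a [Ya Hb]]]. eauto.
  - eapply IHphi with (Q := Q) (X := image M X); [assumption|assumption| |assumption]. split.
    + intros a [x [Xx Hr]]. destruct (H1 x Xx) as [y [Yy Hb]].
      destruct (pbisim_step _ _ _ _ _ Hb) as [_ [Hfo _]].
      destruct (Hfo a Hr) as [b [Hr' Hb']]. exists b. split; [exists y|]; eauto.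
    + intros b [y [Yy Hr]]. destruct (H2 y Yy) as [x [Xx Hb]].
      destruct (pbisim_step _ _ _ _ _ Hb) as [_ [_ Hba]].
      destruct (Hba b Hr) as [a [Hr' Hb']]. exists a. split; [exists x|]; eauto.
  - contradiction.
Qed.

Section Glue.
Variables (M M1 : model) (P : letter -> Prop) (p : letter).

Definition pw := { x : world M1 * world M | pbisim P M1 M (fst x) (snd x) }.
Definition prodM : model := Model pw
  (fun s t => rel M1 (fst (proj1_sig s)) (fst (proj1_sig t)) /\ rel M (snd (proj1_sig s)) (snd (proj1_sig t)))
  (fun s q => (q = p /\ val M1 (fst (proj1_sig s)) q) \/ (q <> p /\ val M (snd (proj1_sig s)) q)).

Lemma prod_to_M (s : pw) : pbisim (fun q => q <> p) prodM M s (snd (proj1_sig s)).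
Proof.
  exists (fun (s : world prodM) m => snd (proj1_sig s) = m). split; [reflexivity|].
  intros a b <-. split; [|split].
  - intros q Hq. simpl. split.
    + intros [[E _]|[_ V]]; [contradiction|exact V].
    + intro V; right; split; assumption.
  - intros a' [_ Hr]. exists (snd (proj1_sig a')). split; [exact Hr|reflexivity].
  - intros b' Hr. destruct a as [[a1 a0] Ha]. simpl in *.
    destruct (pbisim_step _ _ _ _ _ Ha) as [_ [_ Hba]].
    destruct (Hba b' Hr) as [a1' [Hr1 Hb1]].
    exists (exist _ (a1', b') Hb1 : world prodM). simpl. split; [split; assumption|reflexivity].
Qed.

Lemma M1_to_prod (F : letter -> Prop) (HF : forall q, F q -> q <> p -> P q) (s : pw) :
  pbisim F M1 prodM (fst (proj1_sig s)) s.
Proof.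
  exists (fun a1 (s : world prodM) => fst (proj1_sig s) = a1). split; [reflexivity|].
  intros a1 s' <-. destruct s' as [[a1 a0] Ha]. simpl.
  destruct (pbisim_step _ _ _ _ _ Ha) as [Hv [Hfo _]].
  split; [|split].
  - intros q Hq. simpl. destruct (Nat.eq_dec q p) as [E|E].
    + split; [intro V; left; split; assumption|].
      intros [[_ V]|[E' _]]; [exact V|contradiction].
    + split.
      * intro V; right; split; [exact E|]. apply (Hv q (HF q Hq E)), V.
      * intros [[E' _]|[_ V]]; [contradiction|]. apply (Hv q (HF q Hq E)), V.
  - intros a1' Hr. destruct (Hfo a1' Hr) as [b [Hr' Hb]].
    exists (exist _ (a1', b) Hb : world prodM). simpl. split; [split; assumption|reflexivity].
  - intros t [Hr _]. exists (fst (proj1_sig t)). split; [exact Hr|reflexivity].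
Qed.
End Glue.

Lemma glue (phi : form) (p : letter) (M M1 : model) (X : team M) (Y : team M1) :
  is_fmtl phi ->
  team_pbisim (fun q => free phi q /\ q <> p) M1 M Y X -> sat M1 Y phi ->
  exists (M2 : model) (X2 : team M2),
    team_pbisim (fun q => q <> p) M2 M X2 X /\ sat M2 X2 phi.
Proof.
  intros Hf [H1 H2] Hs.
  set (P := fun q => free phi q /\ q <> p).
  exists (prodM M M1 P p).
  exists (fun s : world (prodM M M1 P p) => Y (fst (proj1_sig s)) /\ X (snd (proj1_sig s))).
  split.
  - split.
    + intros s [_ Xs]. exists (snd (proj1_sig s)). split; [exact Xs|apply prod_to_M].
    + intros x Xx. destruct (H2 x Xx) as [y [Yy Hb]].
      exists (exist _ (y, x) Hb : world (prodM M M1 P p)). simpl. split; [split; assumption|].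
      apply (prod_to_M M M1 P p (exist _ (y, x) Hb)).
  - eapply inv with (Q := free phi); eauto. split.
    + intros y Yy. destruct (H1 y Yy) as [x [Xx Hb]].
      exists (exist _ (y, x) Hb : world (prodM M M1 P p)). simpl. split; [split; assumption|].
      apply (M1_to_prod M M1 P p (free phi)) with (s := exist _ (y, x) Hb).
      intros q Hq E; split; assumption.
    + intros s [Ys _]. exists (fst (proj1_sig s)). split; [exact Ys|].
      apply (M1_to_prod M M1 P p (free phi)). intros q Hq E; split; assumption.
Qed.

Definition sumM (A B : model) : model := Model (world A + world B)
  (fun s t => match s, t with
              | inl a, inl a' => rel A a a'
              | inr b, inr b' => rel B b b'
              | _, _ => False end)
  (fun s q => match s with inl a => val A a q | inr b => val B b q end).

Lemma sum_to_M (R : letter -> Prop) (A B M : model) (s : world (sumM A B)) m :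
  match s with inl a => pbisim R A M a m | inr b => pbisim R B M b m end ->
  pbisim R (sumM A B) M s m.
Proof.
  intro H.
  exists (fun (s : world (sumM A B)) m =>
    match s with inl a => pbisim R A M a m | inr b => pbisim R B M b m end).
  split; [exact H|].
  intros [a|b] m' Hb; destruct (pbisim_step _ _ _ _ _ Hb) as [Hv [Hfo Hba]]; simpl;
    (split; [exact Hv|split]).
  - intros [a'|b'] Hr; [|contradiction]. destruct (Hfo a' Hr) as [c [Hc Hc']]. eauto.
  - intros c Hc. destruct (Hba c Hc) as [a' [Hr Hb']]. exists (inl a'). simpl; eauto.
  - intros [a'|b'] Hr; [contradiction|]. destruct (Hfo b' Hr) as [c [Hc Hc']]. eauto.
  - intros c Hc. destruct (Hba c Hc) as [a' [Hr Hb']]. exists (inr a'). simpl; eauto.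
Qed.

Lemma inl_bisim (A B : model) (a : world A) :
  pbisim (fun _ => True) A (sumM A B) a (inl a).
Proof.
  exists (fun a s => s = inl a). split; [reflexivity|].
  intros x s ->. split; [|split].
  - intros; simpl; tauto.
  - intros a' Hr. exists (inl a'). simpl; auto.
  - intros [a'|b'] Hr; [|contradiction]. exists a'. simpl in *; auto.
Qed.

Lemma inr_bisim (A B : model) (b : world B) :
  pbisim (fun _ => True) B (sumM A B) b (inr b).
Proof.
  exists (fun a s => s = inr a). split; [reflexivity|].
  intros x s ->. split; [|split].
  - intros; simpl; tauto.
  - intros a' Hr. exists (inr a'). simpl; auto.
  - intros [a'|b'] Hr; [contradiction|]. exists b'. simpl in *; auto.
Qed.

Theorem mainTheorem8 : forall (phi1 phi2 : form) (p : letter),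
  is_fmtl phi1 -> is_fmtl phi2 ->
  equiv (FExists p (FAnd phi1 FNE)) (FAnd (FExists p phi1) FNE) /\
  equiv (FExists p (FOr phi1 phi2)) (FOr (FExists p phi1) (FExists p phi2)) /\
  equiv (FExists p (FTensor phi1 phi2)) (FTensor (FExists p phi1) (FExists p phi2)).
Proof.
  intros phi1 phi2 p F1 F2. split; [|split]; intros M X; simpl; split.
  - intros [M' [X' [HT [S [s Xs]]]]]. split.
    + exists M', X'. split; [|exact S]. eapply team_mono; [|exact HT]. simpl; tauto.
    + destruct HT as [H1 _]. destruct (H1 s Xs) as [y [Yy _]]. eauto.
  - intros [[M' [X' [HT S]]] [s Xs]]. exists M', X'. split; [|split; [exact S|]].
    + eapply team_mono; [|exact HT]. simpl; tauto.
    + destruct HT as [_ H2]. destruct (H2 s Xs) as [y [Yy _]]. eauto.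
  - intros [M' [X' [HT [S|S]]]]; [left|right]; exists M', X'; (split; [|exact S]);
      (eapply team_mono; [|exact HT]); simpl; tauto.
  - intros [[M' [X' [HT S]]]|[M' [X' [HT S]]]].
    + destruct (glue phi1 p M M' X X' F1 HT S) as [M2 [X2 [HT2 S2]]].
      exists M2, X2. split; [|left; exact S2]. eapply team_mono; [|exact HT2]. simpl; tauto.
    + destruct (glue phi2 p M M' X X' F2 HT S) as [M2 [X2 [HT2 S2]]].
      exists M2, X2. split; [|right; exact S2]. eapply team_mono; [|exact HT2]. simpl; tauto.
  - intros [M' [X' [[H1 H2] [X1 [X2 [HX [S1 S2]]]]]]].
    set (Q := fun q => (free phi1 q \/ free phi2 q) /\ q <> p).
    exists (fun x => X x /\ exists x', X1 x' /\ pbisim Q M' M x' x).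
    exists (fun x => X x /\ exists x', X2 x' /\ pbisim Q M' M x' x).
    split; [|split].
    + intros s; split.
      * intro Xs. destruct (H2 s Xs) as [x' [Xx' Hb]]. apply HX in Xx'.
        destruct Xx' as [Xx'|Xx']; [left|right]; split; eauto.
      * intros [[Xs _]|[Xs _]]; exact Xs.
    + exists M', X1. split; [|exact S1].
      apply team_mono with (Q := Q); [unfold Q; tauto|]. split.
      * intros x' Hx'. assert (Xx' : X' x') by (apply HX; left; exact Hx').
        destruct (H1 x' Xx') as [y [Yy Hb]]. exists y. split; [split|]; eauto.
      * intros y [_ [x' [Hx' Hb]]]. eauto.
    + exists M', X2. split; [|exact S2].
      apply team_mono with (Q := Q); [unfold Q; tauto|]. split.
      * intros x' Hx'. assert (Xx' : X' x') by (apply HX; right; exact Hx').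
        destruct (H1 x' Xx') as [y [Yy Hb]]. exists y. split; [split|]; eauto.
      * intros y [_ [x' [Hx' Hb]]]. eauto.
  - intros [X1 [X2 [HX [[MA [YA [HTA SA]]] [MB [YB [HTB SB]]]]]]].
    destruct (glue phi1 p M MA X1 YA F1 HTA SA) as [A [XA [[HA1 HA2] SA']]].
    destruct (glue phi2 p M MB X2 YB F2 HTB SB) as [B [XB [[HB1 HB2] SB']]].
    exists (sumM A B).
    exists (fun s : world (sumM A B) => match s with inl a => XA a | inr b => XB b end).
    split.
    + apply team_mono with (Q := fun q => q <> p); [tauto|]. split.
      * intros [a|b] H.
        -- destruct (HA1 a H) as [x [Xx Hb]]. exists x. split; [apply HX; left; exact Xx|].
           apply sum_to_M with (s := inl a). exact Hb.
        -- destruct (HB1 b H) as [x [Xx Hb]]. exists x. split; [apply HX; right; exact Xx|].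
           apply sum_to_M with (s := inr b). exact Hb.
      * intros x Xx. apply HX in Xx. destruct Xx as [Xx|Xx].
        -- destruct (HA2 x Xx) as [a [Xa Hb]]. exists (inl a). split; [exact Xa|].
           apply sum_to_M with (s := inl a). exact Hb.
        -- destruct (HB2 x Xx) as [b [Xb Hb]]. exists (inr b). split; [exact Xb|].
           apply sum_to_M with (s := inr b). exact Hb.
    + exists (fun s : world (sumM A B) => match s with inl a => XA a | inr _ => False end).
      exists (fun s : world (sumM A B) => match s with inl _ => False | inr b => XB b end).
      split; [|split].
      * intros [a|b]; simpl; tauto.
      * eapply inv with (Q := fun _ => True) (X := XA); eauto. split.
        -- intros a Xa. exists (inl a). split; [exact Xa|apply inl_bisim].
        -- intros [a|b] H; [|contradiction]. exists a. split; [exact H|apply inl_bisim].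
      * eapply inv with (Q := fun _ => True) (X := XB); eauto. split.
        -- intros b Xb. exists (inr b). split; [exact Xb|apply inr_bisim].
        -- intros [a|b] H; [contradiction|]. exists b. split; [exact H|apply inr_bisim].
Qed.
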